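(* Let $p>3$ be a prime, and set $A_p=\left(\tfrac{p-1}{2}\right)!!\prod_{i,j=1,\ p\nmid 2i+j}^{(p-1)/2}(2i+j)$ and $B_p=\left(\tfrac{p-3}{2}\right)!!\prod_{i,j=1,\ p\nmid 2i-j}^{(p-1)/2}(2i-j)$. Then $A_pB_p\equiv\left(\frac{-2}{p}\right)\pmod p$.
   Context: For a positive integer $n$, $n!!=\prod_{k=0}^{\lfloor(n-1)/2\rfloor}(n-2k)$, and $0!!=1$. $\left(\frac{\cdot}{p}\right)$ denotes the Legendre symbol. *)

(* Defs.v *)
From HB Require Import structures.
From mathcomp Require Import all_boot all_order all_algebra.
Set Implicit Arguments. Unset Strict Implicit. Unset Printing Implicit Defensive.
Import Order.TTheory GRing.Theory Num.Theory.

Fixpoint dfact (n : nat) : nat :=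
  match n with
  | 0 => 1
  | 1 => 1
  | (m.+2) as k => (k * dfact m)%N
  end.

Definition legendre (a : int) (p : nat) : int :=
  if (p%:Z %| a)%Z then 0%R
  else if [exists x : 'I_p, ((x%:Z) ^+ 2 == a %[mod p%:Z])%Z] then 1%R
  else (-1)%R.

(* Main.v *)
Require Import Defs.
From HB Require Import structures.
From mathcomp Require Import all_boot all_order all_algebra all_field.
From mathcomp Require Import zify ring.
Import Order.TTheory GRing.Theory Num.Theory.
Local Open Scope ring_scope.

Lemma hp_eq (p : nat) (hp : prime p) (hp3 : (3 < p)%N) :
  p = (((p - 1) %/ 2).*2.+1)%N.
Proof.
have [p2|podd] := even_prime hp; first by rewrite p2 in hp3.
have : (p %% 2 = 1)%N by rewrite modn2 podd.
lia.
Qed.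

Lemma Fp_nz (p n : nat) (hp : prime p) : (0 < n < p)%N -> (n%:R : 'F_p) != 0.
Proof.
move=> /andP[n0 np]; rewrite -(dvdn_pcharf (pchar_Fp hp)).
by rewrite gtnNdvd.
Qed.

Lemma Fp_ferm (p : nat) (hp : prime p) (y : 'F_p) : y != 0 -> y ^+ (p - 1) = 1.
Proof.
move=> y0; have hy := expf_card y; rewrite card_Fp // in hy.
have : y ^+ (p - 1) * y = 1 * y.
  by rewrite -exprSr subn1 prednK ?prime_gt0 // mul1r.
exact: mulIf.
Qed.

Lemma Fp_sqinj (p : nat) (hp : prime p) (hp3 : (3 < p)%N) (j k : nat) :
  (0 < j <= (p - 1) %/ 2)%N -> (0 < k <= (p - 1) %/ 2)%N ->
  (j%:R : 'F_p) ^+ 2 = (k%:R) ^+ 2 -> j = k.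
Proof.
have hpe := hp_eq _ hp hp3.
move=> /andP[j0 jh] /andP[k0 kh] /eqP; rewrite -subr_eq0 subr_sqr mulf_eq0.
case/orP=> [|/eqP].
  rewrite subr_eq0 => /eqP E.
  have := congr1 (@nat_of_ord _) E; rewrite !val_Fp_nat // !modn_small //; lia.
rewrite -natrD => E.
have H : (0 < j + k < p)%N by apply/andP; split; lia.
by have := Fp_nz _ _ hp H; rewrite E eqxx.
Qed.

Definition sqs (p : nat) : seq 'F_p :=
  map (fun j : nat => (j%:R : 'F_p) ^+ 2) (index_iota 1 ((p - 1) %/ 2).+1).

Lemma sqs_root (p : nat) (hp : prime p) (hp3 : (3 < p)%N) (j : nat) :
  (0 < j <= (p - 1) %/ 2)%N -> ((j%:R : 'F_p) ^+ 2) ^+ ((p - 1) %/ 2) = 1.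
Proof.
have hpe := hp_eq _ hp hp3.
move=> hj; rewrite -exprM.
have -> : (2 * ((p - 1) %/ 2) = p - 1)%N by lia.
apply: Fp_ferm => //; apply: Fp_nz => //; lia.
Qed.

Lemma LP0 (p : nat) (hp : prime p) (hp3 : (3 < p)%N) :
  \prod_(j <- index_iota 1 ((p - 1) %/ 2).+1) ('X - (((j%:R : 'F_p) ^+ 2)%:P))
   = 'X^((p - 1) %/ 2) - 1.
Proof.
have hpe := hp_eq _ hp hp3.
set h := ((p - 1) %/ 2)%N.
have h0 : (0 < h)%N by rewrite /h; lia.
have szs : size (sqs p) = h by rewrite size_map size_iota; lia.
have := @all_roots_prod_XsubC _ ('X^h - 1) (sqs p).
rewrite -polyC1 size_XnsubC // szs => /(_ erefl).
rewrite (monicP (monicXnsubC _ h0)) scale1r big_map => <- //.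
  apply/allP => x /mapP [j]; rewrite mem_index_iota => hj ->.
  by rewrite rootE !hornerE sqs_root ?subrr //; lia.
rewrite uniq_rootsE map_inj_in_uniq ?iota_uniq //.
move=> j k; rewrite !mem_index_iota => hj hk.
apply: Fp_sqinj => //; lia.
Qed.

Lemma LL (p : nat) (hp : prime p) (hp3 : (3 < p)%N) (j0 : nat) :
  (0 < j0 <= (p - 1) %/ 2)%N ->
  \prod_(j <- index_iota 1 ((p - 1) %/ 2).+1 | j != j0)
     ((j0%:R : 'F_p) ^+ 2 - (j%:R) ^+ 2) * (j0%:R) ^+ 2 = ((p - 1) %/ 2)%:R.
Proof.
have hpe := hp_eq _ hp hp3.
move=> hj0.
set h := ((p - 1) %/ 2)%N.
set x := ((j0%:R : 'F_p) ^+ 2).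
have h0 : (0 < h)%N by rewrite /h; lia.
have hx : x ^+ h = 1 by apply: sqs_root.
have e1 := LP0 _ hp hp3.
have hm : j0 \in index_iota 1 h.+1 by rewrite mem_index_iota; lia.
rewrite (bigD1_seq j0 hm (iota_uniq _ _)) /= in e1.
set g := \prod_(j <- _ | _) _ in e1.
have e2 : 'X^h - 1 = ('X - x%:P) * \sum_(k < h) 'X^(h.-1 - k) * (x%:P) ^+ k.
  by rewrite -subrXX -polyC_exp hx polyC1.
rewrite e2 in e1; have e3 := mulfI (negbT (polyXsubC_eq0 x)) e1.
move/(congr1 (fun q => q.[x])): e3.
rewrite horner_prod horner_sum /=.
under eq_bigr do rewrite hornerXsubC.
move=> ->.
rewrite (eq_bigr (fun _ => x ^+ h.-1)); last first.
  move=> k _; rewrite hornerM hornerXn -polyC_exp hornerC -exprD subnK //.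
  by rewrite -ltnS prednK.
rewrite sumr_const card_ord mulrnAl -exprSr prednK // hx.
by [].
Qed.

Lemma LPQ (p : nat) (hp : prime p) (hp3 : (3 < p)%N) (j0 : nat) (u : 'F_p) :
  (0 < j0 <= (p - 1) %/ 2)%N -> (j0%:R : 'F_p) ^+ 2 = u ^+ 2 ->
  \prod_(j <- index_iota 1 ((p - 1) %/ 2).+1 | u + j%:R != 0) (u + j%:R) *
  \prod_(j <- index_iota 1 ((p - 1) %/ 2).+1 | u - j%:R != 0) (u - j%:R) =
  2 * u * \prod_(j <- index_iota 1 ((p - 1) %/ 2).+1 | j != j0)
     ((j0%:R : 'F_p) ^+ 2 - (j%:R) ^+ 2).
Proof.
have hpe := hp_eq _ hp hp3.
move=> hj0 hu.
set h := ((p - 1) %/ 2)%N.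
have hm : j0 \in index_iota 1 h.+1 by rewrite mem_index_iota; lia.
have other : forall j, j \in index_iota 1 h.+1 -> j != j0 ->
    (u + j%:R != 0) && (u - j%:R != 0).
  move=> j; rewrite mem_index_iota => hj hne.
  apply/andP; split; apply/negP => /eqP E.
    have E' : u = - j%:R by rewrite -(subr0 u) -E opprD addrA subrr add0r.
    by move/eqP: hne; apply; apply: (Fp_sqinj _ hp hp3); [lia|lia|rewrite hu E' sqrrN].
  have E' : u = j%:R by apply/eqP; rewrite -subr_eq0 E.
  by move/eqP: hne; apply; apply: (Fp_sqinj _ hp hp3); [lia|lia|rewrite hu E'].
rewrite !(big_mkcond (fun j => _ != 0)) /=.
rewrite (bigD1_seq j0 hm (iota_uniq _ _)) (bigD1_seq j0 hm (iota_uniq _ _)) /=.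
rewrite (big_seq_cond (fun j => j != j0)).
rewrite [in X in _ * X](big_seq_cond (fun j => j != j0)).
rewrite [in RHS](big_seq_cond (fun j => j != j0)).
rewrite mulrACA; congr (_ * _).
  have nz2 : ((2 * j0)%:R : 'F_p) != 0 by apply: Fp_nz => //; lia.
  have : (u + j0%:R) * (u - j0%:R) = 0 by rewrite mulrC -subr_sqr hu subrr.
  move/eqP; rewrite mulf_eq0; case/orP=> /eqP E.
    have Ej : (j0%:R : 'F_p) = - u.
      by apply/eqP; rewrite -addr_eq0 addrC; apply/eqP.
    have E' : u - j0%:R = 2 * u by rewrite Ej; ring.
    rewrite E eqxx E' mul1r.
    suff : 2 * u != 0 by move/negbTE ->.
    have -> : 2 * u = - ((2 * j0)%:R) by rewrite natrM Ej; ring.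
    by rewrite oppr_eq0.
  have Ej : (j0%:R : 'F_p) = u.
    by apply/eqP; rewrite eq_sym -subr_eq0; apply/eqP.
  have E' : u + j0%:R = 2 * u by rewrite Ej; ring.
  rewrite E eqxx E' mulr1.
  suff : 2 * u != 0 by move/negbTE ->.
  by rewrite natrM Ej in nz2.
rewrite -big_split /=; apply: eq_bigr => j /andP[hj hne].
have /andP[-> ->] := other j hj hne.
by rewrite mulrC -subr_sqr hu.
Qed.

Lemma dfactS (n : nat) : (dfact n.+1 * dfact n = n.+1`!)%N.
Proof.
elim: n => [//|n IH].
rewrite /= -/(dfact n.+1) -/(dfact n).
case: n IH => [//|n] IH.
rewrite factS -IH /=; ring.
Qed.

Lemma LEuler (p : nat) (hp : prime p) (hp3 : (3 < p)%N) :
  (((p - 1) %/ 2)%:R : 'F_p) ^+ ((p - 1) %/ 2) = (legendre (-2) p)%:~R.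
Proof.
have hpe := hp_eq _ hp hp3.
set h := ((p - 1) %/ 2)%N.
set a : 'F_p := -2.
have a0 : a != 0 by rewrite oppr_eq0; apply: Fp_nz => //; lia.
set e := a ^+ h.
have e2 : e ^+ 2 = 1.
  rewrite -exprM.
  have -> : (h * 2 = p - 1)%N by rewrite /h; lia.
  exact: Fp_ferm.
have ha : (h%:R : 'F_p) * a = 1.
  have -> : (h%:R : 'F_p) * a = - ((h * 2)%:R) by rewrite natrM /a; ring.
  have -> : (h * 2 = p - 1)%N by rewrite /h; lia.
  rewrite natrB ?prime_gt0 // pchar_Fp_0 //; ring.
have -> : (h%:R : 'F_p) ^+ h = e.
  have : (h%:R : 'F_p) ^+ h * e = 1 by rewrite -exprMn ha expr1n.
  move=> H; have -> : (h%:R : 'F_p) ^+ h = (h%:R) ^+ h * (e * e) by rewrite -expr2 e2 mulr1.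
  by rewrite mulrA H mul1r.
rewrite /legendre.
have -> : (p%:Z %| -2)%Z = false.
  rewrite (dvdz_pcharf (pchar_Fp hp)).
  by apply/negbTE; rewrite -[(-2)%:~R]/(-2 : 'F_p) oppr_eq0; apply: Fp_nz => //; lia.
case: existsP => [[x hx]|hn].
  rewrite eqz_mod_dvd (dvdz_pcharf (pchar_Fp hp)) rmorphB rmorphXn subr_eq0 in hx.
  move/eqP: hx => hx.
  have hx' : ((x : nat)%:R : 'F_p) ^+ 2 = a by exact: hx.
  have y0 : ((x : nat)%:R : 'F_p) != 0.
    by apply/negP => /eqP y0; move: a0; rewrite -hx' y0 expr0n eqxx.
  rewrite rmorph1 /e -hx' -exprM.
  have -> : (2 * h = p - 1)%N by rewrite /h; lia.
  exact: Fp_ferm.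
rewrite rmorphN1.
move/eqP: e2; rewrite sqrf_eq1 => /orP[/eqP e1|/eqP //].
exfalso; apply: hn.
have : root ('X^h - 1) a by rewrite rootE !hornerE -/e e1 subrr.
rewrite -(LP0 _ hp hp3) -(big_map (fun j : nat => (j%:R : 'F_p) ^+ 2) xpredT (fun z => 'X - z%:P)).
rewrite root_prod_XsubC => /mapP [j]; rewrite mem_index_iota => hj haj.
have jp : (j < p)%N by lia.
exists (Ordinal jp).
rewrite eqz_mod_dvd (dvdz_pcharf (pchar_Fp hp)) rmorphB rmorphXn subr_eq0 /=.
by rewrite -haj.
Qed.


Lemma key (p : nat) (hp : prime p) (hp3 : (3 < p)%N) :
  let h := ((p - 1) %/ 2)%N in
  ((dfact h)%:R * \prod_(1 <= i < h.+1)
       \prod_(1 <= j < h.+1 | ((2 * i)%:R + j%:R : 'F_p) != 0) ((2 * i)%:R + j%:R)) *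
  ((dfact ((p - 3) %/ 2))%:R * \prod_(1 <= i < h.+1)
       \prod_(1 <= j < h.+1 | ((2 * i)%:R - j%:R : 'F_p) != 0) ((2 * i)%:R - j%:R))
  = (h%:R : 'F_p) ^+ h.
Proof.
move=> h.
have := hp_eq _ hp hp3; rewrite -/h -mul2n => hpe.
rewrite mulrACA -big_split /= -natrM.
have -> : (dfact h * dfact ((p - 3) %/ 2) = h`!)%N.
  have -> : ((p - 3) %/ 2 = h.-1)%N by rewrite /h; lia.
  have -> : h = h.-1.+1 by rewrite /h; lia.
  by rewrite dfactS.
rewrite fact_prod natr_prod -big_split /= big_seq.
rewrite (eq_bigr (fun _ => (h%:R : 'F_p))); last first.
  move=> i; rewrite mem_index_iota => hi.
  set u : 'F_p := (2 * i)%:R.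
  pose j0 := if (2 * i <= h)%N then (2 * i)%N else (p - 2 * i)%N.
  have hj0 : (0 < j0 <= (p - 1) %/ 2)%N.
    rewrite /j0 -/h; case: (leqP (2 * i) h) => H; lia.
  have hsq : (j0%:R : 'F_p) ^+ 2 = u ^+ 2.
    rewrite /j0; case: (leqP (2 * i) h) => // H.
    by rewrite natrB ?pchar_Fp_0 // ?sub0r ?sqrrN //; lia.
  rewrite (LPQ _ hp hp3 _ _ hj0 hsq) mulrA.
  have -> : (i%:R : 'F_p) * (2 * u) = u ^+ 2 by rewrite /u natrM; ring.
  by rewrite -hsq mulrC (LL _ hp hp3 _ hj0).
by rewrite -big_seq prodr_const_nat subn1.
Qed.

Local Close Scope ring_scope.

Theorem mainTheorem11 (p : nat) (hp : prime p) (hp3 : (3 < p)%N) :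
  let h := ((p - 1) %/ 2)%N in
  let A : int := ((dfact ((p - 1) %/ 2))%:Z *
      \prod_(1 <= i < h.+1) \prod_(1 <= j < h.+1 | ~~ (p %| 2 * i + j)%N)
          ((2 * i + j)%N)%:Z)%R in
  let B : int := ((dfact ((p - 3) %/ 2))%:Z *
      \prod_(1 <= i < h.+1) \prod_(1 <= j < h.+1 | ~~ (p%:Z %| (2 * i)%:Z - j%:Z)%Z)
          ((2 * i)%:Z - j%:Z))%R in
  (A * B == legendre (-2) p %[mod p%:Z])%Z.
Proof.
Local Open Scope ring_scope.
cbv zeta; set h := ((p - 1) %/ 2)%N.
have hpe := hp_eq _ hp hp3.
rewrite eqz_mod_dvd (dvdz_pcharf (pchar_Fp hp)) rmorphB subr_eq0.
rewrite [X in _ == X](_ : _ = (h%:R : 'F_p) ^+ h); last exact: (esym (LEuler _ hp hp3)).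
rewrite rmorphM; apply/eqP; rewrite -(key _ hp hp3) -/h.
congr (_ * _).
  rewrite rmorphM rmorph_prod; congr (_ * _).
  apply: eq_bigr => i _; rewrite rmorph_prod.
  apply: eq_big => j.
    by rewrite (dvdn_pcharf (pchar_Fp hp)) natrD.
  by move=> _; rewrite -natz rmorph_nat natrD.
rewrite rmorphM rmorph_prod; congr (_ * _).
apply: eq_bigr => i _; rewrite rmorph_prod.
apply: eq_big => j.
  by rewrite (dvdz_pcharf (pchar_Fp hp)) rmorphB -!natz !rmorph_nat.
by move=> _; rewrite rmorphB -!natz !rmorph_nat.
Qed.
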